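(* The filter $\mathscr F^{\mathrm{1cas}}_{\rho}$ is a normal filter of subgroups of $\mathscr G^{\mathrm{1cas}}_{\rho}$ (i.e. it is closed under conjugation by elements of $\mathscr G^{\mathrm{1cas}}_{\rho}$).
   Context: $\rho:\omega_1\setminus\{0\}\to\omega_1$ is a regressive map, $\operatorname{Succ}_\rho(\xi)=\{\eta:\rho(\eta)=\xi\}$, $\operatorname{cl}_\rho(A)$ the least superset of $A$ closed under $\rho$. $\mathbb P_1=\operatorname{Fn}(\omega_1\times\omega\times\omega,2,{<}\omega)$. For $\xi<\omega_1$, $i<\omega$, $s\subseteq\omega$ finite or cofinite, $\tau^{\mathrm{1cas}}_{\xi,i,s}$ is the automorphism of $\mathbb P_1$ flipping the value of a condition at each coordinate $(\zeta,i,n)$ with $n\in s$ and $\zeta\in\{\xi\}\cup\operatorname{Succ}_\rho(\xi)$. $\mathscr G^{\mathrm{1cas}}_\rho$ is the group generated by these automorphisms. For $A\subseteq\omega_1$, $\operatorname{Fix}^{\mathrm{1cas}}_\rho(A)$ is the subgroup of elements acting trivially on all coordinates $(\zeta,j,n)$ with $\zeta\in\operatorname{cl}_\rho(A)$. $\mathscr F^{\mathrm{1cas}}_\rho$ is the filter of subgroups generated by the $\operatorname{Fix}^{\mathrm{1cas}}_\rho(A)$ for countable $A\subseteq\omega_1$. *)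

(* Defs.v *)
From Stdlib Require Import Classical ClassicalEpsilon List Arith.
Set Implicit Arguments.

Section OneCas.

(* [W] with strict order [lt] and least element [z] plays the role of omega_1
   (see [is_omega1]); [z] is the ordinal 0. *)
Variables (W : Type) (lt : W -> W -> Prop) (z : W).

Definition countable (A : W -> Prop) : Prop :=
  exists f : W -> nat, forall x y, A x -> A y -> f x = f y -> x = y.

Definition is_omega1 : Prop :=
  (forall x, ~ lt x x) /\
  (forall x y w, lt x y -> lt y w -> lt x w) /\
  (forall x y, x = y \/ lt x y \/ lt y x) /\
  well_founded lt /\
  (forall x, ~ lt x z) /\
  ~ countable (fun _ => True) /\
  (forall x, countable (fun y => lt y x)).

Variable rho : W -> W.
(* rho is only meaningful on W \ {z} (its value at z is irrelevant) *)
Definition regressive : Prop := forall eta, eta <> z -> lt (rho eta) eta.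

Definition Succ (xi : W) (eta : W) : Prop := eta <> z /\ rho eta = xi.

Inductive cl (A : W -> Prop) : W -> Prop :=
| cl_base : forall x, A x -> cl A x
| cl_step : forall x, cl A x -> x <> z -> cl A (rho x).

Definition coord := (W * nat * nat)%type.

(* conditions of P_1 = Fn(omega_1 x omega x omega, 2, <omega) *)
Definition cond :=
  { p : coord -> option bool |
    exists l : list coord, forall c, p c <> None -> In c l }.

Definition pdec (P : Prop) : bool :=
  if excluded_middle_informative P then true else false.

Definition finite_or_cofinite (s : nat -> bool) : Prop :=
  (exists N, forall n, N <= n -> s n = false) \/
  (exists N, forall n, N <= n -> s n = true).

Definition flips (xi : W) (i : nat) (s : nat -> bool) (c : coord) : bool :=
  match c with
  | (zeta, j, n) => Nat.eqb j i && s n && pdec (zeta = xi \/ Succ xi zeta)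
  end.

Definition tau_fun (xi : W) (i : nat) (s : nat -> bool)
  (p : coord -> option bool) : coord -> option bool :=
  fun c => if flips xi i s c then option_map negb (p c) else p c.

Lemma tau_fun_fin xi i s (p : cond) :
  exists l : list coord, forall c, tau_fun xi i s (proj1_sig p) c <> None -> In c l.
Proof.
  destruct p as [p [l Hl]]; exists l; intros c Hc; apply Hl; simpl in Hc.
  unfold tau_fun in Hc; destruct (flips xi i s c); auto.
  destruct (p c); simpl in *; congruence.
Qed.

Definition tau (xi : W) (i : nat) (s : nat -> bool) (p : cond) : cond :=
  exist _ (tau_fun xi i s (proj1_sig p)) (tau_fun_fin xi i s p).

(* The group G^{1cas}_rho generated by the tau's, inside the group of
   automorphisms of P_1.  [Gen f finv] : f is an element of the generated
   group and finv is its inverse. *)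
Inductive Gen : (cond -> cond) -> (cond -> cond) -> Prop :=
| Gen_id : Gen (fun p => p) (fun p => p)
| Gen_tau : forall xi i s, finite_or_cofinite s ->
    Gen (tau xi i s) (tau xi i s)
| Gen_comp : forall f finv g ginv, Gen f finv -> Gen g ginv ->
    Gen (fun p => f (g p)) (fun p => ginv (finv p))
| Gen_inv : forall f finv, Gen f finv -> Gen finv f.

Definition G (f : cond -> cond) : Prop := exists finv, Gen f finv.

Definition subgroup (H : (cond -> cond) -> Prop) : Prop :=
  (forall f, H f -> G f) /\
  H (fun p => p) /\
  (forall f g, H f -> H g -> H (fun p => f (g p))) /\
  (forall f finv, H f -> Gen f finv -> H finv).

Definition Fix (A : W -> Prop) (f : cond -> cond) : Prop :=
  G f /\
  forall (p : cond) (c : coord),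
    cl A (fst (fst c)) -> proj1_sig (f p) c = proj1_sig p c.

(* F^{1cas}_rho: the filter of subgroups generated by the Fix(A), A countable:
   the subgroups containing a finite intersection of such Fix(A). *)
Definition F (H : (cond -> cond) -> Prop) : Prop :=
  subgroup H /\
  exists As : list (W -> Prop),
    Forall countable As /\
    forall f, G f -> (forall A, In A As -> Fix A f) -> H f.

Definition conj (g ginv : cond -> cond) (H : (cond -> cond) -> Prop)
  : (cond -> cond) -> Prop :=
  fun k => exists h, H h /\ k = (fun p => g (h (ginv p))).

End OneCas.

(* Main.v *)
Require Import Defs.
From Stdlib Require Import Classical ClassicalEpsilon List Arith FunctionalExtensionality ProofIrrelevance.
Set Implicit Arguments.

Definition flipf {C : Type} (b : C -> bool) (q : C -> option bool) : C -> option bool :=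
  fun c => if b c then option_map negb (q c) else q c.

Lemma flipf_comp {C : Type} (b1 b2 : C -> bool) q :
  flipf b1 (flipf b2 q) = flipf (fun c => xorb (b1 c) (b2 c)) q.
Proof.
  apply functional_extensionality; intro c; unfold flipf.
  destruct (b1 c), (b2 c), (q c) as [[|]|]; reflexivity.
Qed.

Lemma flipf_self {C : Type} (b : C -> bool) q : flipf b (flipf b q) = q.
Proof.
  apply functional_extensionality; intro c; unfold flipf.
  destruct (b c), (q c) as [[|]|]; reflexivity.
Qed.

Lemma cond_eq (W : Type) (p q : cond W) : proj1_sig p = proj1_sig q -> p = q.
Proof.
  destruct p, q; simpl; intro; subst; f_equal; apply proof_irrelevance.
Qed.

Lemma rep (W : Type) (z : W) rho f finv : Gen z rho f finv ->
  exists b, (forall p, proj1_sig (f p) = flipf b (proj1_sig p)) /\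
            (forall p, proj1_sig (finv p) = flipf b (proj1_sig p)).
Proof.
  induction 1.
  - exists (fun _ => false); split; intro p; apply functional_extensionality;
      intro c; reflexivity.
  - exists (flips z rho xi i s); split; intro p; reflexivity.
  - destruct IHGen1 as [b1 [E1 E2]], IHGen2 as [b2 [E3 E4]].
    exists (fun c => xorb (b1 c) (b2 c)); split; intro p.
    + rewrite E1, E3, flipf_comp; reflexivity.
    + rewrite E4, E2, flipf_comp.
      f_equal; apply functional_extensionality; intro c; destruct (b1 c), (b2 c); reflexivity.
  - destruct IHGen as [b [E1 E2]]; exists b; split; auto.
Qed.

Lemma inv_l (W : Type) (z : W) rho f finv : Gen z rho f finv ->
  forall p, f (finv p) = p.
Proof.
  intros Hg p; destruct (rep Hg) as [b [E1 E2]]; apply cond_eq.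
  rewrite E1, E2, flipf_self; reflexivity.
Qed.

Lemma inv_r (W : Type) (z : W) rho f finv : Gen z rho f finv ->
  forall p, finv (f p) = p.
Proof. intros Hg; apply (inv_l (Gen_inv Hg)). Qed.

Lemma comm (W : Type) (z : W) rho f finv g ginv :
  Gen z rho f finv -> Gen z rho g ginv -> forall p, f (g p) = g (f p).
Proof.
  intros Hf Hg p; destruct (rep Hf) as [b1 [E1 _]], (rep Hg) as [b2 [E2 _]].
  apply cond_eq; rewrite E1, E2, E2, E1, !flipf_comp.
  f_equal; apply functional_extensionality; intro c; destruct (b1 c), (b2 c); reflexivity.
Qed.

Theorem proposition2p8 (W : Type) (lt : W -> W -> Prop) (z : W)
  (Hw1 : is_omega1 lt z) (rho : W -> W) (Hrho : regressive lt z rho) :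
  forall (g ginv : cond W -> cond W), Gen z rho g ginv ->
  forall H : (cond W -> cond W) -> Prop,
    F z rho H -> F z rho (conj g ginv H).
Proof.
  intros g ginv Hg H [[HG [Hid [Hcomp Hinv]]] [As [HAs Hfix]]].
  split; [split; [|split; [|split]]|].
  - intros k [h [Hh ->]].
    destruct (HG h Hh) as [hinv Hhi].
    eexists. exact (Gen_comp Hg (Gen_comp Hhi (Gen_inv Hg))).
  - exists (fun p => p); split; auto.
    apply functional_extensionality; intro p; symmetry; apply (inv_l Hg).
  - intros k1 k2 [h1 [Hh1 ->]] [h2 [Hh2 ->]].
    exists (fun p => h1 (h2 p)); split; auto.
    apply functional_extensionality; intro p; rewrite (inv_r Hg); reflexivity.
  - intros k kinv [h [Hh ->]] Hk.
    destruct (HG h Hh) as [hinv Hhi].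
    exists hinv; split; [eapply Hinv; eauto|].
    apply functional_extensionality; intro p.
    transitivity (kinv ((fun p => g (h (ginv p))) (g (hinv (ginv p))))).
    + simpl. rewrite (inv_r Hg), (inv_l Hhi), (inv_l Hg). reflexivity.
    + apply (inv_r Hk).
  - exists As; split; auto.
    intros f Gf Hf. destruct Gf as [finv Hfi].
    assert (E : (fun p => ginv (f (g p))) = f).
    { apply functional_extensionality; intro p.
      rewrite (comm (Gen_inv Hg) Hfi), (inv_r Hg); reflexivity. }
    exists (fun p => ginv (f (g p))); split.
    + rewrite E; apply Hfix; [exists finv; exact Hfi| exact Hf].
    + apply functional_extensionality; intro p.
      rewrite !(inv_l Hg); reflexivity.
Qed.
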